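(* Identify $\mathbb{S}_n$ with its image in $\mathrm{End}_K(P_n)$ under the action described in the context. Then $$G_n=\{\sigma_\varphi\mid \varphi\in\mathrm{Aut}_K(P_n)\ \text{such that}\ \varphi\mathbb{S}_n\varphi^{-1}=\mathbb{S}_n\},\qquad \sigma_\varphi(a):=\varphi a\varphi^{-1}\ (a\in\mathbb{S}_n).$$
   Context: $K$ is a field of characteristic zero. $\mathbb{S}_n$ is the $K$-algebra generated by $x_1,\dots,x_n,y_1,\dots,y_n$ with defining relations $y_ix_i=1$ ($1\le i\le n$) and $[x_i,y_j]=[x_i,x_j]=[y_i,y_j]=0$ for $i\ne j$; $G_n=\mathrm{Aut}_{K\text{-alg}}(\mathbb{S}_n)$. $P_n=K[x_1,\dots,x_n]$ is a faithful $\mathbb{S}_n$-module via $x_i*x^\alpha=x^{\alpha+e_i}$ and $y_i*x^\alpha=x^{\alpha-e_i}$ if $\alpha_i>0$, $y_i*x^\alpha=0$ if $\alpha_i=0$ (here $x^\alpha=x_1^{\alpha_1}\cdots x_n^{\alpha_n}$, $e_i$ the standard basis vectors of $\mathbb{Z}^n$). $\mathrm{Aut}_K(P_n)$ is the group of invertible $K$-linear maps $P_n\to P_n$. *)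

(* Defs.v *)
From HB Require Import structures.
From mathcomp Require Import all_boot all_order all_algebra.
Set Implicit Arguments. Unset Strict Implicit. Unset Printing Implicit Defensive.
Import GRing.Theory.
Local Open Scope ring_scope.

Section Jacobian.
Variables (K : fieldType) (n : nat).

(* exponent vectors alpha in N^n; x^alpha is the basis vector indexed by alpha *)
Definition monom := {ffun 'I_n -> nat}.
Definition incr (i : 'I_n) (a : monom) : monom := [ffun j => a j + (j == i)]%N.
Definition decr (i : 'I_n) (a : monom) : monom := [ffun j => a j - (j == i)]%N.

(* P_n = K[x_1..x_n], an element is its finitely supported coefficient function *)
Definition finsupp (f : monom -> K) := exists s : seq monom, forall a, f a != 0 -> a \in s.
Definition Pn := {f : monom -> K | finsupp f}.
Definition coef (p : Pn) : monom -> K := proj1_sig p.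

Lemma padd_fs (p q : Pn) : finsupp (fun a => coef p a + coef q a).
Proof.
case: p => f [s Hs]; case: q => g [t Ht]; exists (s ++ t) => a /=.
rewrite mem_cat; case: (boolP (f a == 0)) => [/eqP -> |/Hs -> //].
by rewrite add0r => /Ht ->; rewrite orbT.
Qed.
Definition padd (p q : Pn) : Pn := exist _ _ (padd_fs p q).

Lemma pscale_fs (c : K) (p : Pn) : finsupp (fun a => c * coef p a).
Proof.
case: p => f [s Hs]; exists s => a /=.
by case: (boolP (f a == 0)) => [/eqP -> | /Hs //]; rewrite mulr0 eqxx.
Qed.
Definition pscale (c : K) (p : Pn) : Pn := exist _ _ (pscale_fs c p).

(* x_i * x^alpha = x^(alpha + e_i) *)
Lemma X_fs (i : 'I_n) (p : Pn) :
  finsupp (fun a => if (0 < a i)%N then coef p (decr i a) else 0).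
Proof.
case: p => f [s Hs]; exists (map (incr i) s) => a /=.
case: ifP => [Hai /Hs Hin|]; last by rewrite eqxx.
have -> : a = incr i (decr i a).
  by apply/ffunP => j; rewrite !ffunE; case: eqP => [-> |]; rewrite ?subn1 ?addn1 ?prednK ?addn0 ?subn0.
exact: map_f.
Qed.
Definition Xop (i : 'I_n) (p : Pn) : Pn := exist _ _ (X_fs i p).

(* y_i * x^alpha = x^(alpha - e_i) if alpha_i > 0, and 0 if alpha_i = 0 *)
Lemma Y_fs (i : 'I_n) (p : Pn) : finsupp (fun a => coef p (incr i a)).
Proof.
case: p => f [s Hs]; exists (map (decr i) s) => a /= /Hs Hin.
have -> : a = decr i (incr i a).
  by apply/ffunP => j; rewrite !ffunE addnK.
exact: map_f.
Qed.
Definition Yop (i : 'I_n) (p : Pn) : Pn := exist _ _ (Y_fs i p).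

Definition plinear (f : Pn -> Pn) :=
  (forall p q, f (padd p q) = padd (f p) (f q)) /\
  (forall c p, f (pscale c p) = pscale c (f p)).

(* The image of S_n in End_K(P_n): the K-subalgebra generated by the
   operators x_i, y_i (1 <= i <= n). *)
Inductive inS : (Pn -> Pn) -> Prop :=
| inS_one : inS id
| inS_X i : inS (Xop i)
| inS_Y i : inS (Yop i)
| inS_add a b : inS a -> inS b -> inS (fun p => padd (a p) (b p))
| inS_scale c a : inS a -> inS (fun p => pscale c (a p))
| inS_mul a b : inS a -> inS b -> inS (a \o b).

Definition Sn := {a : Pn -> Pn | inS a}.
Definition sval (a : Sn) : Pn -> Pn := proj1_sig a.

Definition sone : Sn := exist _ _ inS_one.
Definition sadd (a b : Sn) : Sn :=
  exist _ _ (inS_add (proj2_sig a) (proj2_sig b)).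
Definition sscale (c : K) (a : Sn) : Sn := exist _ _ (inS_scale c (proj2_sig a)).
Definition smul (a b : Sn) : Sn :=
  exist _ _ (inS_mul (proj2_sig a) (proj2_sig b)).

Definition is_alg_aut (s : Sn -> Sn) :=
  [/\ bijective s,
      forall a b, sval (s (sadd a b)) = sval (sadd (s a) (s b)),
      forall c a, sval (s (sscale c a)) = sval (sscale c (s a)),
      forall a b, sval (s (smul a b)) = sval (smul (s a) (s b)) &
      sval (s sone) = sval sone].

Definition normalizes (phi psi : Pn -> Pn) :=
  [/\ plinear phi, cancel phi psi, cancel psi phi,
      (forall a, inS a -> inS (phi \o a \o psi)) &
      (forall b, inS b -> exists2 a, inS a & b = phi \o a \o psi)].

End Jacobian.

(* Main.v *)
From Stdlib Require Import ProofIrrelevance FunctionalExtensionality ClassicalEpsilon Classical.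
Require Import Defs.
From HB Require Import structures.
From mathcomp Require Import all_boot all_order all_algebra.
Local Open Scope ring_scope.
Set Implicit Arguments. Unset Strict Implicit. Unset Printing Implicit Defensive.
Import GRing.Theory.

Lemma Pn_ext (K : fieldType) (n : nat) (p q : Pn K n) :
  (forall a, coef p a = coef q a) -> p = q.
Proof.
case: p q => f Hf [g Hg] /= H.
have E : f = g by apply: functional_extensionality.
subst g; f_equal; apply: proof_irrelevance.
Qed.

Lemma Sn_ext (K : fieldType) (n : nat) (a b : Sn K n) : Defs.sval a = Defs.sval b -> a = b.
Proof.
case: a b => f Hf [g Hg] /= E; subst g; f_equal; apply: proof_irrelevance.
Qed.

Lemma Xop_lin (K : fieldType) (n : nat) (i : 'I_n) : plinear (@Xop K n i).
Proof.
split=> [p q|c p]; apply: Pn_ext => a /=; case: ifP => //; by rewrite ?addr0 ?mulr0.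
Qed.

Lemma Yop_lin (K : fieldType) (n : nat) (i : 'I_n) : plinear (@Yop K n i).
Proof. by split=> [p q|c p]; apply: Pn_ext. Qed.

Lemma inS_lin (K : fieldType) (n : nat) (a : Pn K n -> Pn K n) : inS a -> plinear a.
Proof.
elim=> {a}.
- by split.
- exact: Xop_lin.
- exact: Yop_lin.
- move=> a b _ [Ha1 Ha2] _ [Hb1 Hb2]; split=> [p q|c p]; rewrite ?Ha1 ?Hb1 ?Ha2 ?Hb2;
  apply: Pn_ext => x /=; first by rewrite addrACA.
  by rewrite mulrDr.
- move=> c a _ [Ha1 Ha2]; split=> [p q|c' p]; rewrite ?Ha1 ?Ha2;
  apply: Pn_ext => x /=; first by rewrite mulrDr.
  by rewrite mulrCA.
- move=> a b _ [Ha1 Ha2] _ [Hb1 Hb2]; split=> [p q|c p] /=; by rewrite ?Hb1 ?Ha1 ?Hb2 ?Ha2.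
Qed.

Definition op (K : fieldType) (n : nat) (q : Pn K n) (b : monom n) : Pn K n -> Pn K n :=
  fun p => pscale (coef p b) q.

Lemma mono_fs (K : fieldType) (n : nat) (al : monom n) :
  finsupp (fun a : monom n => if a == al then (1 : K) else 0).
Proof. by exists [:: al] => a; case: (a =P al) => [->|]; rewrite ?mem_seq1 ?eqxx. Qed.
Definition mono (K : fieldType) (n : nat) (al : monom n) : Pn K n := exist _ _ (mono_fs K al).

Definition m0 (n : nat) : monom n := [ffun _ => 0%N].

Definition Dop (K : fieldType) (n : nat) (i : 'I_n) : Pn K n -> Pn K n :=
  fun p => padd p (pscale (-1) (Xop i (Yop i p))).

Lemma Dop_in (K : fieldType) (n : nat) i : inS (@Dop K n i).
Proof. apply: inS_add; first exact: inS_one. apply: inS_scale; apply: inS_mul; constructor. Qed.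

Lemma incr_decr (n : nat) (i : 'I_n) (a : monom n) : (0 < a i)%N -> incr i (decr i a) = a.
Proof.
move=> H; apply/ffunP => j; rewrite !ffunE; case: eqP => [-> |] /=;
  by rewrite ?subn1 ?addn1 ?prednK ?addn0 ?subn0.
Qed.

Lemma decr_incr (n : nat) (i : 'I_n) (a : monom n) : decr i (incr i a) = a.
Proof. by apply/ffunP => j; rewrite !ffunE addnK. Qed.

Lemma Dop_coef (K : fieldType) (n : nat) i (p : Pn K n) a :
  coef (Dop i p) a = if (0 < a i)%N then 0 else coef p a.
Proof.
rewrite /Dop /=; case: ifP => H; last by rewrite mulr0 addr0.
by rewrite incr_decr // mulN1r subrr.
Qed.

Definition Eop (K : fieldType) (n : nat) (l : seq 'I_n) : Pn K n -> Pn K n :=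
  foldr (fun i g => @Dop K n i \o g) id l.

Lemma Eop_in (K : fieldType) (n : nat) l : inS (@Eop K n l).
Proof. elim: l => [|i l IH] /=; [exact: inS_one | exact: inS_mul (Dop_in _ _) IH]. Qed.

Lemma Eop_coef (K : fieldType) (n : nat) l (p : Pn K n) a :
  coef (Eop l p) a = if all (fun i => a i == 0%N) l then coef p a else 0.
Proof.
elim: l => [|i l IH] //.
have -> : Eop (i :: l) p = Dop i (Eop l p) by [].
rewrite Dop_coef IH lt0n /=.
by case: (a i == 0%N).
Qed.

Lemma e_in (K : fieldType) (n : nat) : inS (op (mono K (m0 n)) (m0 n)).
Proof.
suff -> : op (mono K (m0 n)) (m0 n) = Eop (enum 'I_n) by exact: Eop_in.
apply: functional_extensionality => p; apply: Pn_ext => a.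
rewrite Eop_coef /=.
have -> : all (fun i => a i == 0%N) (enum 'I_n) = (a == m0 n).
  apply/allP/eqP => [H|->] ; last by move=> i _; rewrite ffunE.
  by apply/ffunP => i; rewrite ffunE; apply/eqP; apply: H; rewrite mem_enum.
by case: eqP => [->|]; rewrite ?mulr1 ?mulr0.
Qed.

Lemma mono_incr (K : fieldType) (n : nat) i (al : monom n) :
  mono K (incr i al) = Xop i (mono K al).
Proof.
apply: Pn_ext => a /=.
case: (a =P incr i al) => [->|E].
  by rewrite ffunE eqxx addn1 /= decr_incr eqxx.
case: ifP => // H; case: (decr i a =P al) => // E2; exfalso.
by apply: E; rewrite -E2 incr_decr.
Qed.

Lemma monom_ind (n : nat) (P : monom n -> Prop) :
  P (m0 n) -> (forall i b, P b -> P (incr i b)) -> forall b, P b.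
Proof.
move=> H0 HS b.
have [k Hk] : exists k, (\sum_j b j <= k)%N by exists (\sum_j b j).
elim: k b Hk => [|k IH] b Hk.
  suff -> : b = m0 n by [].
  apply/ffunP => j; rewrite ffunE; apply/eqP; rewrite -leqn0.
  by apply: leq_trans Hk; rewrite (bigD1 j) //= leq_addr.
case: (pickP (fun i => 0 < b i)%N) => [i Hi|Hn].
  rewrite -(incr_decr Hi); apply: HS; apply: IH.
  have Hs : (\sum_j b j = b i + \sum_(j | j != i) b j)%N by rewrite (bigD1 i).
  have Hd : (\sum_j decr i b j = (b i).-1 + \sum_(j | j != i) b j)%N.
    rewrite (bigD1 i) //= ffunE eqxx subn1; congr (_ + _)%N.
    by apply: eq_bigr => j /negbTE Hj; rewrite ffunE Hj subn0.
  by rewrite Hd; move: Hk; rewrite Hs -(prednK Hi) addSn ltnS.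
suff -> : b = m0 n by [].
by apply/ffunP => j; rewrite ffunE; move: (Hn j) => /= /negbT; rewrite lt0n negbK => /eqP.
Qed.

Lemma opY (K : fieldType) (n : nat) (q : Pn K n) i b : op q (incr i b) = op q b \o Yop i.
Proof. by []. Qed.

Lemma opX (K : fieldType) (n : nat) (q : Pn K n) i b : op (Xop i q) b = Xop i \o op q b.
Proof.
apply: functional_extensionality => p; rewrite /op /=.
by case: (Xop_lin K i) => _ ->.
Qed.

Lemma opD (K : fieldType) (n : nat) (q r : Pn K n) b :
  op (padd q r) b = fun p => padd (op q b p) (op r b p).
Proof.
by apply: functional_extensionality => p; apply: Pn_ext => a /=; rewrite mulrDr.
Qed.

Lemma opZ (K : fieldType) (n : nat) (q : Pn K n) c b :
  op (pscale c q) b = fun p => pscale c (op q b p).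
Proof.
by apply: functional_extensionality => p; apply: Pn_ext => a /=; rewrite mulrCA.
Qed.

Lemma op_in (K : fieldType) (n : nat) (q : Pn K n) b : inS (op q b).
Proof.
elim/monom_ind: b => [|i b IH]; last by rewrite opY; apply: inS_mul; [exact: IH | exact: inS_Y].
have Hm : forall al, inS (op (mono K al) (m0 n)).
  elim/monom_ind => [|i al IH]; first exact: e_in.
  by rewrite mono_incr opX; apply: inS_mul; [exact: inS_X | exact: IH].
case: q => f [s Hs].
elim: s f Hs => [|al s IH] f Hs.
  have -> : exist (fun f => finsupp f) f (ex_intro _ [::] Hs) = pscale 0 (mono K (m0 n)).
    apply: Pn_ext => a /=; rewrite mul0r.
    by case: (boolP (f a == 0)) => [/eqP //|/Hs].
  by rewrite opZ; apply: inS_scale.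
pose g := fun a => if a == al then 0 else f a.
have Hg : forall a, g a != 0 -> a \in s.
  move=> a; rewrite /g; case: (a =P al) => [_|E]; first by rewrite eqxx.
  by move/Hs; rewrite in_cons => /orP [/eqP//|].
have -> : exist (fun f => finsupp f) f (ex_intro _ (al :: s) Hs) =
  padd (pscale (f al) (mono K al)) (exist (fun f => finsupp f) g (ex_intro _ s Hg)).
  apply: Pn_ext => a /=; rewrite /g; case: (a =P al) => [->|_].
    by rewrite mulr1 addr0.
  by rewrite mulr0 add0r.
rewrite opD; apply: inS_add; last exact: IH.
by rewrite opZ; apply: inS_scale.
Qed.

Lemma part2 (K : fieldType) (n : nat) (phi psi : Pn K n -> Pn K n) :
  normalizes phi psi ->
  exists s : Sn K n -> Sn K n,
    is_alg_aut s /\ forall a : Sn K n, sval (s a) = phi \o sval a \o psi.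
Proof.
case=> [[Hadd Hsc] c1 c2 H4 H5].
have Hinv : forall b, inS b -> inS (psi \o b \o phi).
  move=> b /H5 [a Ha ->].
  suff -> : psi \o (phi \o a \o psi) \o phi = a by [].
  by apply: functional_extensionality => p /=; rewrite !c1.
pose s := fun a : Sn K n => exist (@inS K n) _ (H4 _ (proj2_sig a)) : Sn K n.
pose t := fun a : Sn K n => exist (@inS K n) _ (Hinv _ (proj2_sig a)) : Sn K n.
exists s; split => // ; split.
- exists t => a; apply: Sn_ext; apply: functional_extensionality => p /=.
    by rewrite !c1.
  by rewrite !c2.
- move=> a b; apply: functional_extensionality => p /=; by rewrite Hadd.
- move=> c a; apply: functional_extensionality => p /=; by rewrite Hsc.
- move=> a b; apply: functional_extensionality => p /=; by rewrite c1.
- by apply: functional_extensionality => p /=; rewrite c2.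
Qed.

Definition Sop (K : fieldType) (n : nat) (q : Pn K n) (b : monom n) : Sn K n :=
  exist (@inS K n) _ (op_in q b).

Lemma part1 (K : fieldType) (n : nat) (s : Sn K n -> Sn K n) :
  is_alg_aut s ->
  exists phi psi : Pn K n -> Pn K n,
    normalizes phi psi /\ forall a : Sn K n, Defs.sval (s a) = phi \o Defs.sval a \o psi.
Proof.
case=> [[g sg gs] Hadd Hsc Hmul Hone].
pose one := mono K (m0 n).
pose e := Sop one (m0 n).
have Hex : exists p gm, coef (Defs.sval (s e) p) gm != 0.
  apply: NNPP => Hn.
  have E : s e = s (sscale 0 e).
    apply: Sn_ext; rewrite Hsc; apply: functional_extensionality => p.
    apply: Pn_ext => a /=; rewrite mul0r.
    case: (eqVneq (coef (Defs.sval (s e) p) a) 0) => // H; exfalso; apply: Hn; by exists p, a.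
  have E2 : e = sscale 0 e by rewrite -[LHS]sg E sg.
  have := congr1 (fun x => coef (Defs.sval x one) (m0 n)) E2.
  by rewrite /= eqxx mulr1 mul0r; apply/eqP; rewrite oner_neq0.
case: Hex => p0 [gm Hgm].
pose w := Defs.sval (s e) p0.
have ee : smul e e = e.
  apply: Sn_ext; apply: functional_extensionality => p; apply: Pn_ext => a /=.
  by rewrite eqxx !mulr1.
have fw : Defs.sval (s e) w = w.
  have := congr1 (fun f => f p0) (Hmul e e); rewrite ee /= => E.
  exact: (esym E).
pose phi := fun q => Defs.sval (s (Sop q (m0 n))) w.
have Hint : forall (a : Sn K n) q, phi (Defs.sval a q) = Defs.sval (s a) (phi q).
  move=> a q; rewrite /phi.
  have -> : Sop (Defs.sval a q) (m0 n) = smul a (Sop q (m0 n)).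
    apply: Sn_ext; apply: functional_extensionality => p /=.
    rewrite /op; case: (inS_lin (proj2_sig a)) => _ H.
    by rewrite H.
  by rewrite (Hmul a).
have phi1 : phi one = w by [].
have phiD : forall q r, phi (padd q r) = padd (phi q) (phi r).
  move=> q r; rewrite /phi.
  have -> : Sop (padd q r) (m0 n) = sadd (Sop q (m0 n)) (Sop r (m0 n)).
    by apply: Sn_ext; rewrite /= opD.
  by rewrite (Hadd _ _).
have phiZ : forall c q, phi (pscale c q) = pscale c (phi q).
  move=> c q; rewrite /phi.
  have -> : Sop (pscale c q) (m0 n) = sscale c (Sop q (m0 n)).
    by apply: Sn_ext; rewrite /= opZ.
  by rewrite (Hsc _ _).
have phi_inj : forall q r, phi q = phi r -> q = r.
  move=> q r E; apply: Pn_ext => b.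
  pose O := Sop one b.
  have E1 : forall q, Defs.sval O q = pscale (coef q b) one by [].
  have := Hint O q; rewrite E -Hint !E1 !phiZ phi1 => /(congr1 (fun x => coef x gm)) /=.
  by move/(mulIf Hgm).
have phi_surj : forall r, exists q, phi q = r.
  move=> r.
  pose b := Sop (pscale (coef w gm)^-1 r) gm.
  exists (Defs.sval (g b) one).
  rewrite Hint gs phi1; apply: Pn_ext => a /=.
  by rewrite mulrA mulrV ?mul1r // unitfE.
pose psi := fun r => proj1_sig (constructive_indefinite_description _ (phi_surj r)).
have c2 : cancel psi phi.
  by move=> r; rewrite /psi; case: (constructive_indefinite_description _ _).
have c1 : cancel phi psi by move=> q; apply: phi_inj; rewrite c2.
have Hmain : forall a : Sn K n, Defs.sval (s a) = phi \o Defs.sval a \o psi.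
  move=> a; apply: functional_extensionality => r /=.
  by rewrite Hint c2.
exists phi, psi; split => //; split => //.
- move=> a Ha; rewrite -(Hmain (exist _ a Ha)); exact: proj2_sig.
- move=> b Hb; exists (Defs.sval (g (exist _ b Hb))); first exact: proj2_sig.
  by rewrite -Hmain gs.
Qed.

Unset Implicit Arguments.

Theorem theorem3p2 (K : fieldType) (n : nat) (charK0 : [pchar K] =i pred0) :
  (forall s : Sn K n -> Sn K n, is_alg_aut s ->
     exists phi psi : Pn K n -> Pn K n,
       normalizes phi psi /\ forall a : Sn K n, sval (s a) = phi \o sval a \o psi) /\
  (forall phi psi : Pn K n -> Pn K n, normalizes phi psi ->
     exists s : Sn K n -> Sn K n,
       is_alg_aut s /\ forall a : Sn K n, sval (s a) = phi \o sval a \o psi).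
Proof.
split; [exact: part1 | exact: part2].
Qed.
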